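(* For all nonnegative integers $k$, $n$, and $r$, \[ \sum_{i=0}^k\binom{(r+1)i+n}{i} \;=\; \sum_{\alpha \in \mathcal{C}(k, r)} (-1)^{|\alpha|-\ell(\alpha)} \Biggl(\prod_{j=1}^{\ell(\alpha)}\binom{r}{\alpha_j-1}\Biggr)\binom{(r+1)k+n+1-|\alpha|+\ell(\alpha)}{k-|\alpha|}. \]
   Context: A composition $\alpha=(\alpha_1,\dots,\alpha_j)$ of an integer $m\ge 0$ is a finite sequence of positive integers summing to $m$; the empty composition $()$ is the unique composition of $0$. Write $|\alpha|$ for the sum of the parts and $\ell(\alpha)$ for the number of parts. For integers $m\ge 0$ and $r \geq 0$, let $c(m,r)$ be the set of compositions $\alpha$ of $m$ with $2\le \alpha_i\le r+1$ for all $1 \leq i \leq \ell(\alpha)$, and let $\mathcal{C}(k,r)=\bigcup_{m=0}^k c(m,r)$. The empty product equals $1$. *)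

(* Defs.v *)
From mathcomp Require Import all_boot all_order all_algebra.
Set Implicit Arguments. Unset Strict Implicit. Unset Printing Implicit Defensive.
Import Order.TTheory GRing.Theory Num.Theory.

(* Compositions are represented as sequences of positive naturals.
   [comps_fuel f m] lists all compositions of m (fuel f >= m suffices). *)
Fixpoint comps_fuel (f m : nat) : seq (seq nat) :=
  match f with
  | 0 => if m == 0 then [:: [::]] else [::]
  | f'.+1 =>
      if m == 0 then [:: [::]]
      else flatten [seq [seq i.+1 :: c | c <- comps_fuel f' (m - i.+1)]
                   | i <- iota 0 m]
  end.

Definition compositions (m : nat) : seq (seq nat) := comps_fuel m m.

Definition c_set (m r : nat) : seq (seq nat) :=
  [seq a <- compositions m | all (fun x => (2 <= x <= r.+1)%N) a].

Definition C_set (k r : nat) : seq (seq nat) :=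
  flatten [seq c_set m r | m <- iota 0 k.+1].

Example compositions_4 :
  compositions 4 = [:: [:: 1;1;1;1]; [:: 1;1;2]; [:: 1;2;1]; [:: 1;3];
                       [:: 2;1;1]; [:: 2;2]; [:: 3;1]; [:: 4]].
Proof. by []. Qed.

(* Main.v *)
Require Import Defs.
From mathcomp Require Import all_boot all_order all_algebra.
From mathcomp Require Import zify ring.
Import Order.TTheory GRing.Theory Num.Theory.
Local Open Scope ring_scope.
Lemma triangle (h : nat -> nat -> int) k :
  \sum_(0 <= m < k) \sum_(0 <= i < m.+1) h i (m - i)%N
  = \sum_(0 <= i < k) \sum_(0 <= j < k - i) h i j.
Proof.
elim: k => [|k IH]; first by rewrite !big_geq.
rewrite [RHS]big_nat_recr //= subSnn big_nat1.
have -> : \sum_(0 <= i < k) \sum_(0 <= j < k.+1 - i) h i j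
   = \sum_(0 <= i < k) (\sum_(0<=j<k-i) h i j + h i (k - i)%N).
  apply: eq_big_nat => i /andP[_ lik]; by rewrite subSn ?(ltnW lik) // big_nat_recr.
rewrite big_split /= -IH [LHS]big_nat_recr //= [X in _ + X = _]big_nat_recr //= subnn.
by rewrite !addrA.
Qed.

Lemma alt r : forall Y m, (r <= Y)%N ->
  \sum_(0 <= i < m.+1) (-1) ^+ i * ('C(r, i))%:Z * ('C(Y - i, m - i))%:Z
  = ('C(Y - r, m))%:Z.
Proof.
elim: r => [|r IH] Y m hY.
  rewrite big_nat_recl // big1 ?addr0 ?subn0 ?bin0 ?expr0 ?mul1r //.
  by move=> i _; rewrite bin0n /= mulr0 mul0r.
case: m => [|m].
  by rewrite big_nat1 !bin0 expr0 !mul1r.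
rewrite big_nat_recl //.
under eq_bigr => i _ do rewrite binS PoszD mulrDr mulrDl subSS subnS.
rewrite big_split /=.
have e1 := IH Y m.+1 (ltnW hY).
rewrite big_nat_recl // in e1.
have e2 := IH Y.-1 m.
rewrite (_ : \sum_(0 <= i < m.+1) (-1) ^+ i.+1 * ('C(r, i))%:Z * ('C((Y - i).-1, m - i))%:Z
   = - \sum_(0 <= i < m.+1) (-1) ^+ i * ('C(r, i))%:Z * ('C(Y.-1 - i, m - i))%:Z); last first.
  rewrite -sumrN; apply: eq_bigr => i _.
  by rewrite exprS mulN1r !mulNr -subnS -subn1 -subnDA add1n.
rewrite e2; last by lia.
rewrite !bin0 !subn0 !expr0 !mul1r in e1 *.
rewrite (eq_bigr (fun i => (-1) ^+ i.+1 * ('C(r, i.+1))%:Z * ('C((Y - i).-1, m - i))%:Z)) in e1; last by move=> i _; rewrite subSS subnS.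
rewrite (_ : ('C(Y - r.+1, m.+1))%:Z = ('C(Y - r, m.+1))%:Z - ('C(Y.-1 - r, m))%:Z).
  by rewrite -e1 addrA.
rewrite (_ : (Y - r = (Y - r.+1).+1)%N); last by lia.
rewrite (_ : (Y.-1 - r = (Y - r.+1))%N); last by lia.
by rewrite binS PoszD addrK.
Qed.
Definition L r k n : int := \sum_(0 <= i < k.+1) ('C((r.+1 * i + n)%N, i))%:Z.

Lemma Lclosed r k n : L r k n = ('C((r.+1 * k+n).+1, k))%:Z
  + \sum_(0<=m<k) ('C((r.+1 * m+n).+1, m))%:Z - \sum_(0<=m<k) ('C((r.+1 * m.+1+n)%N, m))%:Z.
Proof.
rewrite /L; elim: k => [|k IH].
  by rewrite big_nat1 !big_geq // !bin0 addr0 subr0.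
rewrite big_nat_recr //= IH !big_nat_recr //= binS PoszD.
ring.
Qed.

Lemma Lrec r k n : L r k n = ('C((r.+1 * k+n).+1, k))%:Z
  + \sum_(0 <= i < k) (if (0 < i <= r)%N then (-1)^+i * ('C(r,i))%:Z * L r (k - i.+1) (n + r * i.+1 + 1) else 0).
Proof.
case: k => [|K].
  by rewrite /L big_nat1 big_geq // !bin0 addr0.
set T := fun i => (-1)^+i * ('C(r,i))%:Z * L r (K - i) (n + r * i.+1 + 1).
have E1 : \sum_(0 <= i < K.+1) (if (0 < i <= r)%N then (-1)^+i * ('C(r,i))%:Z * L r (K.+1 - i.+1) (n + r * i.+1 + 1) else 0)
   = \sum_(0 <= i < K.+1) T i - T 0%N.
  rewrite big_nat_recl // [in RHS]big_nat_recl //= add0r addrAC subrr add0r.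
  apply: eq_bigr => i _; rewrite subSS /T.
  case: leqP => // hi; by rewrite bin_small // mulr0 mul0r.
have E2 : \sum_(0 <= i < K.+1) T i = \sum_(0 <= m < K.+1) ('C((r.+1 * m + n).+1, m))%:Z.
  pose h i j := (-1)^+i * ('C(r,i))%:Z * ('C((r.+1 * j + (n + r * i.+1 + 1))%N, j))%:Z.
  transitivity (\sum_(0 <= i < K.+1) \sum_(0 <= j < K.+1 - i) h i j).
    apply: eq_big_nat => i /andP[_ hi]; rewrite /T /L big_distrr subSn //.
  rewrite -triangle; apply: eq_bigr => m _.
  have -> : ((r.+1 * m + n).+1 = r.+1 * m.+1 + n - r)%N by nia.
  rewrite -alt; last by nia.
  apply: eq_big_nat => i /andP[_ hi]; rewrite /h.
  congr (_ * _%:Z); congr 'C(_, _); nia.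
have E3 : T 0%N = \sum_(0 <= m < K.+1) ('C((r.+1 * m.+1 + n)%N, m))%:Z.
  rewrite /T /L expr0 bin0 !mul1r subn0 muln1; apply: eq_bigr => j _.
  congr (_%:Z); congr 'C(_, _); lia.
by rewrite E1 E2 E3 Lclosed addrA.
Qed.
Lemma comps_mem f : forall m c, c \in comps_fuel f m -> sumn c = m /\ all (fun x => 0 < x)%N c.
Proof.
elim: f => [|f IH] m c /=.
  by case: eqP => [->|_]; rewrite ?inE // => /eqP ->.
case: eqP => [->|_]; first by rewrite inE => /eqP ->.
move=> /flattenP [s /mapP [i]]; rewrite mem_iota add0n => /andP [_ him] ->.
move=> /mapP [c' /IH [hs ha] ->] /=; split => //; lia.
Qed.

Lemma comps_unfold f m : comps_fuel f.+1 m = if m == 0%N then [:: [::]]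
  else flatten [seq [seq i.+1 :: c | c <- comps_fuel f (m - i.+1)] | i <- iota 0 m].
Proof. by []. Qed.

Lemma comps_fuel_S f : forall m, (m <= f)%N -> comps_fuel f.+1 m = comps_fuel f m.
Proof.
elim: f => [|f IH] m hm.
  by move: hm; rewrite leqn0 => /eqP ->.
rewrite comps_unfold [RHS]comps_unfold; case: eqP => // _.
congr flatten; apply/eq_in_map => i; rewrite mem_iota add0n => /andP [_ him].
rewrite IH //; lia.
Qed.

Lemma comps_fuel_eq f m : (m <= f)%N -> comps_fuel f m = compositions m.
Proof.
elim: f => [|f IH] hm.
  by move: hm; rewrite leqn0 => /eqP ->.
case: (ltngtP m f.+1) hm => // h _.
  by rewrite comps_fuel_S ?IH.
by rewrite h.
Qed.

Lemma compositions_S m : compositions m.+1 =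
  flatten [seq [seq i.+1 :: c | c <- compositions (m - i)] | i <- iota 0 m.+1].
Proof.
rewrite /compositions comps_unfold (_ : (m.+1 == 0%N) = false) //; congr flatten; apply/eq_in_map => i.
rewrite mem_iota add0n => /andP [_ him].
by rewrite subSS comps_fuel_eq //; lia.
Qed.

Lemma C_set_mem k r c : c \in C_set k r -> (sumn c <= k)%N /\ (size c <= sumn c)%N.
Proof.
move=> /flattenP [s /mapP [m]]; rewrite mem_iota add0n => /andP [_ hm] ->.
rewrite mem_filter => /andP [_ /comps_mem [hs ha]]; split; first lia.
elim: c ha {hs} => //= x c IH /andP [hx /IH]; lia.
Qed.

Lemma c_set_S (F : seq nat -> int) m r :
  \sum_(a <- c_set m.+1 r) F a = \sum_(0 <= i < m.+1)
    (if (0 < i <= r)%N then \sum_(c <- c_set (m - i) r) F (i.+1 :: c) else 0).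
Proof.
rewrite /c_set big_filter compositions_S big_flatten big_map.
apply: eq_bigr => i _; rewrite big_map /=.
case: ifP => hi.
  by rewrite big_filter; apply: eq_bigr.
by rewrite big_pred0.
Qed.

Lemma C_set_dec (F : seq nat -> int) k r :
  \sum_(a <- C_set k r) F a = F [::] + \sum_(0 <= i < k)
    (if (0 < i <= r)%N then \sum_(c <- C_set (k - i.+1) r) F (i.+1 :: c) else 0).
Proof.
rewrite /C_set big_flatten big_map.
change (iota 0 k.+1) with (index_iota 0 k.+1).
rewrite big_nat_recl // (_ : c_set 0 r = [:: [::]]) // big_seq1; congr (_ + _).
under eq_bigr => m _ do rewrite c_set_S.
rewrite (triangle (fun i j => if (0 < i <= r)%N then \sum_(c <- c_set j r) F (i.+1 :: c) else 0)).
apply: eq_big_nat => i /andP [_ hi].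
case: ifP => _; last by rewrite big1.
rewrite big_flatten big_map; change (iota 0 (k - i.+1).+1) with (index_iota 0 (k - i.+1).+1).
by rewrite (_ : (k - i.+1).+1 = k - i)%N; last by lia.
Qed.
Definition R r k n : int := \sum_(a <- C_set k r)
     (-1) ^+ (sumn a - size a)%N
     * (\prod_(x <- a) ('C(r, x.-1))%:Z)
     * ('C(((r.+1 * k + n).+1 - sumn a + size a)%N, (k - sumn a)%N))%:Z.

Lemma Rrec r k n : R r k n = ('C((r.+1 * k+n).+1, k))%:Z
  + \sum_(0 <= i < k) (if (0 < i <= r)%N then (-1)^+i * ('C(r,i))%:Z * R r (k - i.+1) (n + r * i.+1 + 1) else 0).
Proof.
rewrite /R C_set_dec /= big_nil subn0 addn0 expr0 !mul1r !subn0; congr (_ + _).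
apply: eq_big_nat => i /andP[_ hi]; case: ifP => // _.
rewrite big_distrr; apply: eq_big_seq => c /C_set_mem [hs hl] /=.
rewrite big_cons /=.
have -> : (i.+1 + sumn c - (size c).+1 = i + (sumn c - size c))%N by lia.
have -> : ((r.+1 * k + n).+1 - (i.+1 + sumn c) + (size c).+1
   = (r.+1 * (k - i.+1) + (n + r * i.+1 + 1)).+1 - sumn c + size c)%N by nia.
have -> : (k - (i.+1 + sumn c) = k - i.+1 - sumn c)%N by lia.
rewrite exprD; ring.
Qed.

Theorem corollary3p2 (k n r : nat) :
  (\sum_(0 <= i < k.+1) ('C((r.+1 * i + n)%N, i))%:Z)%R =
  \sum_(a <- C_set k r)
     (-1) ^+ (sumn a - size a)%N
     * (\prod_(x <- a) ('C(r, x.-1))%:Z)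
     * ('C(((r.+1 * k + n).+1 - sumn a + size a)%N, (k - sumn a)%N))%:Z.
Proof.
rewrite -/(L r k n) -/(R r k n).
elim/ltn_ind: k n => k IH n.
rewrite Lrec Rrec; congr (_ + _).
apply: eq_big_nat => i /andP[_ hi]; case: ifP => // _.
rewrite IH //; lia.
Qed.
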